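(* Let $\mathcal Y=\mathbb R^m$, $U\subset\mathbb R^m$ open, $u_0\in U$, and assume (A1), condition (B) at $u_0$, and (A2)–(A3) at $u_0$ for every unit direction $d\in\mathbb R^m$ (in place of $d(u_0)$). If $v$ is differentiable at $u_0$ and, for every $x\in S(u_0)$, $f_x$ is differentiable at $u_0$, then for each unit $d$ the map $x\mapsto D_df_x(u_0)$ is constant on $S(u_0)$, and $\nabla v(u_0)=\nabla_uf(x,u_0)$ for every $x\in S(u_0)$.
   Context: Setting: $\mathfrak X$ a real Banach space, $X\subset\mathfrak X$ nonempty, $U\subset\mathbb R^m$, $f:X\times U\to\mathbb R$, $\Phi:U\to2^X$, $v(u)=\inf_{x\in\Phi(u)}f(x,u)$, $S(u)=\{x\in\Phi(u):f(x,u)=v(u)\}$, $f_x(u)=f(x,u)$, $D_df_x(u)=\lim_{s\downarrow0}\frac{f(x,u+sd)-f(x,u)}{s}$. (A1): $f$ continuous on $X\times U$ and, for every $u\in U$, there exist $\alpha\in\mathbb R$ and compact $C\subset\mathfrak X$ with $\emptyset\ne\{x\in\Phi(u'):f(x,u')\le\alpha\}\subset C$ for all $u'$ near $u$. (A2) at $u_0$ for direction $d$: $D_df_x(u_0)$ exists for all $x\in\Phi(u_0)$ and $\inf_{x\in S(u_0)}D_df_x(u_0)>-\infty$. (A3) at $u_0$ for $d$: if $\{x_k\}\subset\Phi(u_0)$, $x_k\to x\in X$, then $D_df_x(u_0)\le\limsup_kD_df_{x_k}(u_0)$. Condition (B) at $u_0$: either $\Phi(u)\equiv\Phi$ is a fixed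 nonempty closed subset of $X$, or $\Phi(u)=\{x\in X:G(x,u)\in K\}$ with $G:X\times U\to\mathcal Z$ continuous into a topological vector space $\mathcal Z$, $K$ closed with nonempty interior, and $G(x,u_0)\in\operatorname{int}K$ for all $x\in S(u_0)$. *)

(* Defs.v *)
From HB Require Import structures.
From mathcomp Require Import all_boot all_order all_algebra.
From mathcomp Require Import all_classical all_reals all_analysis.
Set Implicit Arguments. Unset Strict Implicit. Unset Printing Implicit Defensive.
Import Order.TTheory GRing.Theory Num.Theory.
Import numFieldNormedType.Exports.
Local Open Scope classical_set_scope.
Local Open Scope ring_scope.

Section Defs.
Variables (R : realType) (E : completeNormedModType R) (m : nat).
Implicit Types (f : E -> 'rV[R]_m -> R) (Phi : 'rV[R]_m -> set E).

Definition optval f Phi (u : 'rV[R]_m) : \bar R :=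
  ereal_inf [set (f x u)%:E | x in Phi u].

Definition solset f Phi (u : 'rV[R]_m) : set E :=
  [set x | Phi u x /\ (f x u)%:E = optval f Phi u].

Definition diffquot f (x : E) (u d : 'rV[R]_m) : R -> R :=
  fun s => (f x (u + s *: d) - f x u) / s.

Definition dirder_ex f x u d : Prop := cvg (diffquot f x u d @ 0^'+).

Definition dirder f x u d : R := lim (diffquot f x u d @ 0^'+).

Definition unit_dir (d : 'rV[R]_m) : Prop := \sum_(i < m) d ord0 i ^+ 2 = 1.

Definition closed_in (X A : set E) : Prop := exists F : set E, closed F /\ A = X `&` F.

Definition A1 f Phi (X : set E) (U : set 'rV[R]_m) : Prop :=
  {within X `*` U, continuous (fun p : E * 'rV[R]_m => f p.1 p.2)} /\
  forall u, U u -> exists (alpha : R) (C : set E), compact C /\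
    \forall u' \near u,
      [set x | Phi u' x /\ f x u' <= alpha] !=set0 /\
      [set x | Phi u' x /\ f x u' <= alpha] `<=` C.

Definition A2 f Phi (u0 d : 'rV[R]_m) : Prop :=
  (forall x, Phi u0 x -> dirder_ex f x u0 d) /\
  (-oo < ereal_inf [set (dirder f x u0 d)%:E | x in solset f Phi u0])%E.

Definition A3 f Phi (X : set E) (u0 d : 'rV[R]_m) : Prop :=
  forall (xk : nat -> E) (x : E), (forall k, Phi u0 (xk k)) -> X x ->
    xk @ \oo --> x ->
    ((dirder f x u0 d)%:E <= limn_esup (fun k => (dirder f (xk k) u0 d)%:E))%E.

Definition condB f Phi (X : set E) (U : set 'rV[R]_m) (u0 : 'rV[R]_m) : Prop :=
  (exists Phi0 : set E, Phi0 !=set0 /\ Phi0 `<=` X /\ closed_in X Phi0 /\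
     forall u, U u -> Phi u = Phi0) \/
  (exists (Z : topologicalLmodType R) (G : E -> 'rV[R]_m -> Z) (K : set Z),
     {within X `*` U, continuous (fun p : E * 'rV[R]_m => G p.1 p.2)} /\
     closed K /\ (K^°) !=set0 /\
     (forall u, U u -> Phi u = [set x | X x /\ K (G x u)]) /\
     (forall x, solset f Phi u0 x -> (K^°) (G x u0))).
End Defs.

(* Main.v *)
Require Import Defs.
From HB Require Import structures.
From mathcomp Require Import all_boot all_order all_algebra.
From mathcomp Require Import all_classical all_reals all_analysis.
Import Order.TTheory GRing.Theory Num.Theory.
Import numFieldNormedType.Exports.
Local Open Scope classical_set_scope.
Local Open Scope ring_scope.

Section H.
Variables (R : realType) (m : nat).

Lemma dq_cvg (F : 'rV[R]_m -> R) (u d : 'rV[R]_m) :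
  differentiable F u ->
  (fun s : R => (F (u + s *: d) - F u) / s) @ 0^'+ --> 'd F u d.
Proof.
move=> dF; have hd : derivable F u d := diff_derivable dF.
rewrite -deriveE //.
have -> : (fun s : R => (F (u + s *: d) - F u) / s) =
  (fun h : R => h^-1 *: ((F \o shift u) (h *: d) - F u)).
  apply/funext => s /=; rewrite [u + _]addrC mulrC /shift /=. by [].
apply: cvg_trans (cvgP _ hd); apply: cvg_app.
move=> A [e egt0 Ae]; exists e => // x xe xgt0; apply: Ae => //.
exact/lt0r_neq0.
Qed.

Lemma dmin_ge0 (g : 'rV[R]_m -> R) (u : 'rV[R]_m) :
  differentiable g u -> (\forall w \near u, g u <= g w) ->
  forall h, 0 <= 'd g u h.
Proof.
move=> dg Hmin h.
have hc : (fun s : R => u + s *: h) @ (nbhs (0:R)) --> u.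
  rewrite -[X in _ --> X]addr0 -(scale0r h).
  apply: cvgD; first exact: cvg_cst.
  exact: cvgZr_tmp cvg_id.
have H1 : \forall s \near (0:R), g u <= g (u + s *: h) := hc _ Hmin.
rewrite -(cvg_lim _ (@dq_cvg g u h dg)) //.
apply: limr_ge; first exact: cvgP (@dq_cvg g u h dg).
apply: filterS H1 => s Hs s0.
by rewrite divr_ge0 ?subr_ge0 // ltW.
Qed.

Lemma lin_ext (L1 L2 : {linear 'rV[R]_m -> R}) : L1 =1 L2 -> L1 = L2.
Proof.
move: L1 L2 => [f1 [c1 d1]] [f2 [c2 d2]] /= h.
have ef := funext h; subst.
case: c1 c2 => [a1] [a2]; case: d1 d2 => [b1] [b2].
by rewrite (Prop_irrelevance a1 a2) (Prop_irrelevance b1 b2).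
Qed.
End H.

Theorem mainTheorem4 (R : realType) (E : completeNormedModType R) (m : nat)
    (X : set E) (U : set 'rV[R]_m) (f : E -> 'rV[R]_m -> R)
    (Phi : 'rV[R]_m -> set E) (u0 : 'rV[R]_m) :
  X !=set0 -> open U -> U u0 ->
  (forall u, U u -> Phi u `<=` X) ->
  A1 f Phi X U ->
  condB f Phi X U u0 ->
  (forall d, unit_dir d -> A2 f Phi u0 d /\ A3 f Phi X u0 d) ->
  forall v : 'rV[R]_m -> R,
  (\forall u \near u0, optval f Phi u = (v u)%:E) ->
  differentiable v u0 ->
  (forall x, solset f Phi u0 x -> differentiable (f x) u0) ->
  (forall d, unit_dir d -> forall x y, solset f Phi u0 x -> solset f Phi u0 y ->
     dirder f x u0 d = dirder f y u0 d) /\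
  (forall x, solset f Phi u0 x -> 'd v u0 = 'd (f x) u0).
Proof.
move=> _ Uo Uu0 PhiX _ hB _ v Hv dv dfx.
have nU : nbhs u0 U by exact: Uo.
have Hmem x : solset f Phi u0 x -> \forall u \near u0, Phi u x.
  move=> Sx; have [Px _] := Sx; have Xx := PhiX u0 Uu0 x Px.
  case: hB => [[Phi0 [_ [_ [_ HP]]]]|[Z [G [K [Gc [_ [_ [HP HK]]]]]]]].
    by apply: filterS nU => u Uu; rewrite HP // -(HP u0 Uu0).
  have hK : nbhs (G x u0) K by exact: (HK x Sx).
  have := (subspace_continuousP _ _).1 Gc (x, u0) (conj Xx Uu0) _ hK.
  rewrite /= nbhs_simpl /within /=.
  move=> [[A B] /= [nA nB] AB].
  have Ax : A x := nbhs_singleton nA.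
  apply: filterS (filterI nB nU) => u [Bu Uu].
  rewrite HP //; split => //.
  exact: (AB (x, u) (conj Ax Bu) (conj Xx Uu)).
have grad x : solset f Phi u0 x -> 'd v u0 = 'd (f x) u0.
  move=> Sx; have [Px Ex] := Sx.
  have e0 : f x u0 = v u0.
    by have := nbhs_singleton Hv; rewrite -Ex => -[].
  have dg : differentiable (f x \- v) u0 := differentiableB (dfx x Sx) dv.
  have Hmin : \forall u \near u0, (f x \- v) u0 <= (f x \- v) u.
    apply: filterS (filterI Hv (Hmem x Sx)) => u [Hu Pu] /=.
    rewrite e0 subrr subr_ge0 -lee_fin -Hu.
    by apply: ereal_inf_lbound; exists x.
  have H0 h : 'd (f x \- v) u0 h = 0.
    apply/eqP; rewrite eq_le dmin_ge0 // andbT.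
    by rewrite -oppr_ge0 -linearN dmin_ge0.
  apply: lin_ext => h; apply/eqP; rewrite eq_sym -subr_eq0; apply/eqP.
  by rewrite -(H0 h) diffB //; apply: dfx.
split => [d _ x y Sx Sy|//].
rewrite /dirder (cvg_lim _ (@dq_cvg _ _ _ _ d (dfx x Sx))) //.
rewrite (cvg_lim _ (@dq_cvg _ _ _ _ d (dfx y Sy))) //.
by rewrite -grad // -grad.
Qed.
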